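(* Let $P>0$, let $\omega:[0,\infty)\to(0,\infty)$ be continuous, and let $\hat{x}:[0,\infty)\times\mathbb{R}\to\mathbb{R}^n$ satisfy $\hat{x}(\tau,t)=\hat{x}(\tau,t+P)$ for all $\tau,t$. For $\theta\in\mathbb{R}$ define $\Omega_\theta(t)=\theta+\int_0^t\omega(s)\,ds$ and $x_\theta(t)=\hat{x}\big(t,\Omega_\theta(t)\big)$. Let $L>0$ satisfy $L>\frac{P}{\omega(\tau)}$ for every $\tau>0$, and let $\varepsilon>0$. Suppose that $$\big\|\hat{x}(\tau+\delta,t)-\hat{x}(\tau,t)\big\|\le\varepsilon$$ for all $\tau>0$, all $t\in\mathbb{R}$ and all $\delta\in(0,L]$. Then for every $\theta\in\mathbb{R}$ and every $\tau>0$, $$\big\|x_\theta\big(\tau+T(\tau)\big)-x_\theta(\tau)\big\|\le\varepsilon,$$ where $T(\tau)>0$ is the unique solution of $P=\int_\tau^{\tau+T(\tau)}\omega(s)\,ds$.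
   Context: This arises from the multi-rate reformulation of circuit equations: $\hat{x}(\tau,t)$ is a multi-rate solution that is $P$-periodic in the fast variable $t$, $\omega$ is a positive frequency parameter, and $x_\theta$ is the single-rate signal recovered along the characteristic $t\mapsto(t,\Omega_\theta(t))$. *)

(* Defs.v *)
From Stdlib Require Import Reals.
From Coquelicot Require Import Coquelicot.
Open Scope R_scope.

(* Vectors of R^n are represented as functions nat -> R, of which only the
   coordinates 0..n-1 matter; ||.|| is the Euclidean norm on R^n. *)
Definition vec := nat -> R.

Definition vsub (u v : vec) : vec := fun i => u i - v i.

Fixpoint sumsq (n : nat) (v : vec) : R :=
  match n with
  | O => 0
  | S k => sumsq k v + (v k) ^ 2
  end.

Definition vnorm (n : nat) (v : vec) : R := sqrt (sumsq n v).

Definition Omega (omega : R -> R) (theta t : R) : R := theta + RInt omega 0 t.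

Definition xtheta (xhat : R -> R -> vec) (omega : R -> R) (theta t : R) : vec :=
  xhat t (Omega omega theta t).

(* Main.v *)
Require Import Defs.
From Stdlib Require Import Reals.
From Coquelicot Require Import Coquelicot.
From Stdlib Require Import Lra.
Open Scope R_scope.

Lemma rmax_lip y z : Rabs (Rmax 0 z - Rmax 0 y) <= Rabs (z - y).
Proof. unfold Rmax; destruct (Rle_dec 0 z), (Rle_dec 0 y); split_Rabs; lra. Qed.

Lemma cont_rmax y : continuous (fun z => Rmax 0 z) y.
Proof.
  apply filterlim_locally. intros eps. exists eps. intros z Hz.
  unfold ball in *; simpl in *; unfold AbsRing_ball, abs, minus, plus, opp in *; simpl in *.
  eapply Rle_lt_trans; [|exact Hz].
  replace (Rmax 0 z + - Rmax 0 y) with (Rmax 0 z - Rmax 0 y) by ring.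
  replace (z + - y) with (z - y) by ring. apply rmax_lip.
Qed.

Theorem lemma1 (n : nat) (P : R) (omega : R -> R) (xhat : R -> R -> vec)
  (L eps : R)
  (HP : 0 < P)
  (Hom_pos : forall s, 0 <= s -> 0 < omega s)
  (Hom_cont : forall s, 0 <= s ->
     filterlim omega (within (fun y => 0 <= y) (locally s)) (locally (omega s)))
  (Hper : forall tau t, 0 <= tau -> xhat tau t = xhat tau (t + P))
  (HL : 0 < L)
  (HLom : forall tau, 0 < tau -> L > P / omega tau)
  (Heps : 0 < eps)
  (Hslow : forall tau t delta, 0 < tau -> 0 < delta <= L ->
     vnorm n (vsub (xhat (tau + delta) t) (xhat tau t)) <= eps) :
  forall theta tau, 0 < tau ->
    (exists! T, 0 < T /\ RInt omega tau (tau + T) = P) /\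
    (forall T, 0 < T -> RInt omega tau (tau + T) = P ->
       vnorm n (vsub (xtheta xhat omega theta (tau + T))
                     (xtheta xhat omega theta tau)) <= eps).
Proof.
  pose (g := fun y => omega (Rmax 0 y)).
  assert (Hg : forall y, continuous g y).
  { intros y. unfold g.
    assert (H1 : filterlim (fun z => Rmax 0 z) (locally y)
                   (within (fun y => 0 <= y) (locally (Rmax 0 y)))).
    { intros Q HQ. unfold within in HQ.
      assert (H2 := cont_rmax y _ HQ). simpl in H2.
      unfold filtermap in *. apply (filter_imp (fun z => 0 <= Rmax 0 z -> Q (Rmax 0 z))); [|exact H2].
      intros z Hz. apply Hz. apply Rmax_l. }
    eapply filterlim_comp; [exact H1|]. apply Hom_cont. apply Rmax_l. }
  assert (Hex : forall a b, 0 <= a -> 0 <= b -> ex_RInt omega a b).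
  { intros a b Ha Hb. apply (ex_RInt_ext g).
    - intros x Hx. unfold g. rewrite Rmax_right; [reflexivity|].
      assert (0 <= Rmin a b) by (apply Rmin_glb; lra). lra.
    - apply (ex_RInt_continuous (V:=R_CompleteNormedModule)). intros; apply Hg. }
  assert (Hlow : forall x, 0 < x -> P / L < omega x).
  { intros x Hx. assert (Hw := Hom_pos x (Rlt_le _ _ Hx)).
    assert (H := HLom x Hx).
    assert (H2 : P < L * omega x).
    { apply (Rmult_lt_compat_r (omega x)) in H; [|exact Hw].
      unfold Rdiv in H. rewrite Rmult_assoc, Rinv_l in H; lra. }
    apply (Rmult_lt_reg_r L); [exact HL|].
    unfold Rdiv. rewrite Rmult_assoc, Rinv_l; lra. }
  assert (Hbound : forall a b, 0 < a -> a <= b -> (b - a) * (P / L) <= RInt omega a b).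
  { intros a b Ha Hab.
    assert (E : RInt (fun _ => P / L) a b = (b - a) * (P / L)).
    { rewrite RInt_const. reflexivity. }
    rewrite <- E. apply RInt_le; auto.
    - apply ex_RInt_const.
    - apply Hex; lra.
    - intros x Hx. apply Rlt_le, Hlow; lra. }
  assert (HPL : 0 < P / L) by (unfold Rdiv; apply Rmult_lt_0_compat; auto; apply Rinv_0_lt_compat; auto).
  intros theta tau Htau. split.
  -
    pose (G := fun u => RInt omega tau u - P).
    assert (HGc : forall u, tau <= u <= tau + 2 * L -> continuity_pt G u).
    { intros u Hu. unfold G. apply continuity_pt_minus; [|apply continuity_pt_const; intros ? ?; reflexivity].
      apply continuity_pt_filterlim.
      apply (continuous_RInt_1 omega tau u (fun z => RInt omega tau z)).
      apply (locally_interval _ u 0 p_infty); simpl; try lra; auto.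
      intros y Hy _. apply (RInt_correct (V:=R_CompleteNormedModule)). apply Hex; lra. }
    assert (HG0 : G tau < 0).
    { unfold G. rewrite RInt_point. unfold zero; simpl. lra. }
    assert (HG1 : 0 < G (tau + 2 * L)).
    { unfold G. assert (H := Hbound tau (tau + 2 * L) Htau ltac:(lra)).
      replace ((tau + 2 * L - tau) * (P / L)) with (2 * P) in H by (field; lra). lra. }
    destruct (Ranalysis5.IVT_interv G tau (tau + 2 * L) HGc ltac:(lra) HG0 HG1) as [z [Hz1 Hz2]].
    exists (z - tau). assert (Hzt : tau < z) by (destruct (Rle_lt_or_eq_dec tau z ltac:(lra)) as [h|h]; [exact h| subst; lra]).
    replace (tau + (z - tau)) with z by ring. unfold G in Hz2.
    split; [split; [lra|]|]. assert (E : tau + (z - tau) = z) by ring. rewrite E. exact (Rminus_diag_uniq _ _ Hz2).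
    intros T' [HT' HI'].
    assert (Huniq : forall T1 T2, 0 < T1 -> T1 < T2 -> RInt omega tau (tau + T1) = P ->
               RInt omega tau (tau + T2) = P -> False).
    { intros T1 T2 H1 H2 E1 E2.
      rewrite <- (RInt_Chasles omega tau (tau + T1) (tau + T2)) in E2
        by (apply Hex; lra).
      change plus with Rplus in E2. rewrite E1 in E2.
      assert (H := Hbound (tau + T1) (tau + T2) ltac:(lra) ltac:(lra)).
      assert (0 < (tau + T2 - (tau + T1)) * (P / L)) by (apply Rmult_lt_0_compat; lra).
      lra. }
    destruct (Rtotal_order (z - tau) T') as [Hlt|[Heq|Hgt]]; auto.
    + exfalso. apply (Huniq (z - tau) T'); auto; try lra.
      replace (tau + (z - tau)) with z by ring. lra.
    + exfalso. apply (Huniq T' (z - tau)); auto; try lra.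
      replace (tau + (z - tau)) with z by ring. lra.
  - intros T HT HI.
    assert (HTL : T <= L).
    { destruct (Rle_lt_dec T L) as [h|h]; auto. exfalso.
      assert (H := Hbound tau (tau + T) Htau ltac:(lra)).
      replace (tau + T - tau) with T in H by ring.
      assert (L * (P / L) < T * (P / L)) by (apply Rmult_lt_compat_r; lra).
      replace (L * (P / L)) with P in H0 by (field; lra). lra. }
    unfold xtheta, Omega.
    rewrite <- (RInt_Chasles omega 0 tau (tau + T)) by (apply Hex; lra).
    change plus with Rplus. rewrite HI.
    rewrite (Hper tau (theta + RInt omega 0 tau)) by lra.
    replace (theta + (RInt omega 0 tau + P)) with (theta + RInt omega 0 tau + P) by ring.
    apply Hslow; lra.
Qed.
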